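(* Let $s,k\geq 2$. Then the $s$-stable Kneser graph $\operatorname{KG}(ks+1,k)_{s-\operatorname{stab}}$ is hom-idempotent, i.e., there is a homomorphism from $\operatorname{KG}(ks+1,k)_{s-\operatorname{stab}}\Box\operatorname{KG}(ks+1,k)_{s-\operatorname{stab}}$ to $\operatorname{KG}(ks+1,k)_{s-\operatorname{stab}}$.
   Context: For integers $s,k\geq 2$ and $n\geq ks$, a subset $S\subseteq[n]=\{1,\dots,n\}$ is $s$-stable if $s\leq |i-j|\leq n-s$ for all distinct $i,j\in S$. The $s$-stable Kneser graph $\operatorname{KG}(n,k)_{s-\operatorname{stab}}$ has as vertices the $s$-stable $k$-subsets of $[n]$, two vertices being adjacent iff they are disjoint. $G\Box H$ denotes the cartesian product of graphs (vertex set $V(G)\times V(H)$, $(g,h)\sim(g',h')$ iff one coordinate is equal and the other coordinates are adjacent). A homomorphism is an edge-preserving map between vertex sets. *)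

(* Defs.v *)
From mathcomp Require Import all_boot.
Set Implicit Arguments. Unset Strict Implicit. Unset Printing Implicit Defensive.

(* Ground set [n] = {1,...,n} is represented by 'I_n = {0,...,n-1} (shift by one;
   differences |i-j| are unchanged). *)

Definition distn (i j : nat) : nat := maxn i j - minn i j.

Definition s_stable (n s : nat) (S : {set 'I_n}) : bool :=
  [forall i in S, forall j in S,
     (i != j) ==> ((s <= distn i j) && (distn i j <= n - s))].

Definition kg_vertex (n k s : nat) (S : {set 'I_n}) : bool :=
  (#|S| == k) && @s_stable n s S.

Definition KGstab (n k s : nat) : Type := {S : {set 'I_n} | @kg_vertex n k s S}.

Definition kg_adj (n k s : nat) (u v : KGstab n k s) : bool :=
  [disjoint val u & val v].

Definition box_adj (T U : eqType) (eT : rel T) (eU : rel U) (x y : T * U) : bool :=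
  ((x.1 == y.1) && eU x.2 y.2) || ((x.2 == y.2) && eT x.1 y.1).

Definition is_hom (T U : Type) (eT : T -> T -> bool) (eU : U -> U -> bool)
  (f : T -> U) : Prop :=
  forall x y, eT x y -> eU (f x) (f y).

(* Main.v *)
Require Import Defs.
From mathcomp Require Import all_boot.
From mathcomp Require Import all_algebra zify.
Set Implicit Arguments. Unset Strict Implicit. Unset Printing Implicit Defensive.
Import GRing.Theory.
Local Open Scope ring_scope.

Lemma valB N (x y : 'I_N.+1) :
  val (y - x) = if (x <= y)%N then (y - x)%N else (N.+1 - (x - y))%N.
Proof.
have -> : val (y - x) = ((y + (N.+1 - x) %% N.+1) %% N.+1)%N by [].
have hx := ltn_ord x; have hy := ltn_ord y.
case: (posnP x) => [->|x0].
  by rewrite subn0 modnn addn0 modn_small // leq0n subn0.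
rewrite (@modn_small (N.+1 - x)); last lia.
case: ifP => hxy.
  have -> : (y + (N.+1 - x) = (y - x) + N.+1)%N by lia.
  by rewrite modnDr modn_small //; lia.
rewrite modn_small; lia.
Qed.

Lemma inZpD N a b : inZp (a + b) = inZp a + inZp b :> 'I_N.+1.
Proof. by apply: val_inj; rewrite /= modnDm. Qed.

Lemma val_inZp N a : (a < N.+1)%N -> val (inZp a : 'I_N.+1) = a.
Proof. by move=> h; rewrite /= modn_small. Qed.

Lemma stab_pt N s (x y : 'I_N.+1) : x != y ->
  ((s <= distn x y) && (distn x y <= N.+1 - s))%N =
  ((s <= val (y - x)%R) && (val (y - x)%R <= N.+1 - s))%N.
Proof.
move=> nxy; rewrite valB /distn.
have hx := ltn_ord x; have hy := ltn_ord y.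
have : (val x != val y) by [].
case: ifP => h ne.
  by rewrite (maxn_idPr h) (minn_idPl h).
have h' : (y <= x)%N by lia.
rewrite (maxn_idPl h') (minn_idPr h').
apply/idP/idP => /andP[h1 h2]; apply/andP; split; lia.
Qed.

Definition rotZ N (a : 'I_N.+1) (S : {set 'I_N.+1}) : {set 'I_N.+1} :=
  [set x + a | x in S].

Lemma stableE N s (S : {set 'I_N.+1}) : s_stable s S =
  [forall x in S, forall y in S, (x != y) ==>
     ((s <= val (y - x)%R) && (val (y - x)%R <= N.+1 - s))%N].
Proof.
apply/forallP/forallP => H x; apply/implyP => xS; apply/forallP => y;
  apply/implyP => yS; apply/implyP => nxy;
  move: (H x) => /implyP/(_ xS)/forallP/(_ y)/implyP/(_ yS)/implyP/(_ nxy);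
  by rewrite stab_pt.
Qed.

Lemma rotB N (a x y : 'I_N.+1) : (y + a) - (x + a) = y - x.
Proof. by rewrite opprD addrACA subrr addr0. Qed.

Lemma rot_stable N s a (S : {set 'I_N.+1}) : s_stable s S -> s_stable s (rotZ a S).
Proof.
rewrite !stableE => /forallP H; apply/forallP => x'; apply/implyP.
case/imsetP => x xS ->; apply/forallP => y'; apply/implyP.
case/imsetP => y yS ->; rewrite rotB; apply/implyP => nxy.
have nxy' : x != y by apply: contra nxy => /eqP ->.
by move: (H x) => /implyP/(_ xS)/forallP/(_ y)/implyP/(_ yS)/implyP/(_ nxy').
Qed.

Lemma rot_card N a (S : {set 'I_N.+1}) : #|rotZ a S| = #|S|.
Proof. by rewrite card_imset //; apply: addIr. Qed.

Lemma rot_vertex N k s a (S : {set 'I_N.+1}) : kg_vertex k s S -> kg_vertex k s (rotZ a S).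
Proof. by case/andP => h1 h2; rewrite /kg_vertex rot_card h1 rot_stable. Qed.

Lemma rot_disj N a (S T : {set 'I_N.+1}) :
  [disjoint rotZ a S & rotZ a T] = [disjoint S & T].
Proof.
rewrite -!setI_eq0 /rotZ -imsetI; last by move=> x y _ _; apply: addIr.
by rewrite imset_eq0.
Qed.

Lemma rot_comp N a b (S : {set 'I_N.+1}) : rotZ a (rotZ b S) = rotZ (b + a) S.
Proof.
by rewrite /rotZ -imset_comp; apply: eq_imset => x /=; rewrite addrA.
Qed.

Definition V0 N k s : {set 'I_N.+1} := [set inZp (val j * s)%N | j : 'I_k].

Lemma struct N k s (hN : N = (k * s)%N) (hs : (2 <= s)%N) (hk : (1 <= k)%N)
  (V : {set 'I_N.+1}) : kg_vertex k s V -> exists a, V = rotZ a (V0 N k s).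
Proof.
case/andP => /eqP cV; rewrite stableE => /forallP Hst.
have stab : forall x y, x \in V -> y \in V -> x != y -> (s <= val (y - x)%R)%N.
  move=> x y xV yV nxy.
  by move: (Hst x) => /implyP/(_ xV)/forallP/(_ y)/implyP/(_ yV)/implyP/(_ nxy)/andP[].
have sn : (s < N.+1)%N by rewrite hN; nia.
pose g (p : 'I_N.+1 * 'I_s) := p.1 + inZp p.2.
pose A := g @: setX V [set: 'I_s].
have cA : #|A| = (k * s)%N.
  rewrite card_in_imset; first by rewrite cardsX cardsT card_ord cV.
  move=> [x i] [y j]; rewrite !inE /= => /andP[xV _] /andP[yV _]; rewrite /g /=.
  move=> e.
  have hi : (i < N.+1)%N by apply: ltn_trans sn.
  have hj : (j < N.+1)%N by apply: ltn_trans sn.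
  case: (eqVneq x y) => [exy|nxy].
    subst y; move/addrI: e => /(congr1 val); rewrite /= !modn_small // => eij.
    by congr pair; apply: val_inj.
  exfalso.
  have e1 : y - x = inZp i - inZp j.
    have ey : y = x + inZp i - inZp j by rewrite e addrK.
    by rewrite ey addrAC [_ + - x]addrAC subrr add0r.
  have e2 : x - y = inZp j - inZp i.
    by rewrite -opprB e1 opprB.
  have := stab _ _ xV yV nxy; have nyx : y != x by rewrite eq_sym.
  have := stab _ _ yV xV nyx.
  rewrite e1 e2 !valB /= !modn_small //.
  have := ltn_ord i; have := ltn_ord j.
  case: ifP; case: ifP; lia.
have hlt : (#|A| < N.+1)%N by rewrite cA hN ltnSn.
have [p pA] : exists p, p \notin A.
  case: (pickP (fun p => p \notin A)) => [p hp|H]; first by exists p.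
  have AT : A = [set: 'I_N.+1].
    by apply/setP => x; rewrite inE; move: (H x) => /= /negbFE.
  by move: hlt; rewrite AT cardsT card_ord ltnn.
have cov : forall q, q != p -> q \in A.
  move=> q nqp; apply/negPn/negP => qA.
  have sub : A \subset ~: [set p; q].
    apply/subsetP => x xA; rewrite !inE negb_or.
    by apply/andP; split; apply/negP => /eqP ex; subst x; [rewrite xA in pA|rewrite xA in qA].
  have := subset_leq_card sub.
  have := cardsC [set p; q]; rewrite card_ord cards2 eq_sym nqp cA.
  lia.
have main : forall j, (j < k)%N -> p + inZp (1 + j * s) \in V.
  have step : forall j, (j < k)%N -> (p + inZp (1 + j * s) \in V) \/
     exists x (i : 'I_s), [/\ x \in V, (0 < i)%N & x + inZp i = p + inZp (1 + j * s)].
    move=> j hj.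
    have qnp : p + inZp (1 + j * s) != p.
      apply/negP => /eqP; rewrite -{2}(addr0 p) => /addrI /(congr1 val) /=.
      rewrite modn_small //; nia.
    case/imsetP: (cov _ qnp) => [[x i]]; rewrite !inE /= => /andP[xV _].
    rewrite /g /= => eq.
    case: (posnP i) => [i0|ip].
      left; rewrite eq; have -> : inZp i = 0 :> 'I_N.+1.
        by apply: val_inj; rewrite /= i0 mod0n.
      by rewrite addr0.
    by right; exists x, i; split.
  elim=> [|j IH] hj.
    case: (step 0%N hj) => [//|[x [i [xV ip e]]]].
    have hi1 : (i.-1 < s)%N by have := ltn_ord i; lia.
    have : g (x, Ordinal hi1) \in A by apply: imset_f; rewrite !inE xV.
    suff -> : g (x, Ordinal hi1) = p by rewrite (negbTE pA).
    apply: (@addIr _ (inZp 1)); rewrite /g /= -addrA -inZpD addn1 prednK //.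
  case: (step _ hj) => [//|[x [i [xV ip e]]]].
  have yV := IH (ltnW hj).
  set y := p + inZp (1 + j * s) in yV.
  have hi := ltn_ord i.
  have exy : x - y = inZp s - inZp i.
    have ex : x = y + inZp s - inZp i.
      rewrite /y -[p + _ + inZp s]addrA -inZpD -addnA [(j * s + s)%N]addnC -mulSn.
      by rewrite -e addrK.
    by rewrite ex addrAC [_ + - y]addrAC subrr add0r.
  have vxy : val (x - y) = (s - i)%N.
    rewrite exy valB /= !modn_small //; try lia.
    by rewrite ifT //; apply: ltnW.
  case: (eqVneq x y) => [exy'|nxy].
    by move: vxy; rewrite exy' subrr /=; lia.
  have := stab _ _ yV xV; rewrite eq_sym => /(_ nxy); rewrite vxy; lia.
exists (p + inZp 1).
apply/eqP; rewrite eq_sym eqEcard; apply/andP; split.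
  apply/subsetP => z /imsetP [w /imsetP [j _ ->] ->].
  rewrite addrC -addrA -inZpD; exact: (main _ (ltn_ord j)).
rewrite rot_card card_imset ?card_ord ?cV //.
move=> i j /(congr1 val) /=.
have := ltn_ord i; have := ltn_ord j => hj hi.
rewrite !modn_small; try nia.
move/eqP; rewrite eqn_pmul2r ?(ltnW hs) // => /eqP h; exact: val_inj.
Qed.

Lemma gen N k s (hN : N = (k * s)%N) (hs : (2 <= s)%N) (hk : (1 <= k)%N) :
  exists f : KGstab N.+1 k s * KGstab N.+1 k s -> KGstab N.+1 k s,
    is_hom (box_adj (@kg_adj N.+1 k s) (@kg_adj N.+1 k s)) (@kg_adj N.+1 k s) f.
Proof.
have ex : forall u : KGstab N.+1 k s, exists a, val u == rotZ a (V0 N k s).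
  by move=> u; case: (struct hN hs hk (valP u)) => a ->; exists a.
pose c (u : KGstab N.+1 k s) : 'I_N.+1 := xchoose (ex u).
have cP : forall u, val u = rotZ (c u) (V0 N k s) by move=> u; apply/eqP; exact: (xchooseP (ex u)).
pose f (x : KGstab N.+1 k s * KGstab N.+1 k s) : KGstab N.+1 k s :=
  exist _ (rotZ (c x.1) (val x.2)) (rot_vertex (c x.1) (valP x.2)).
have fsym : forall u v, rotZ (c u) (sval v) = rotZ (c v) (sval u).
  move=> u v; have := cP u; have := cP v; rewrite /= => -> ->.
  by rewrite !rot_comp addrC.
exists f => [[u v] [u' v']]; rewrite /box_adj /kg_adj /=.
case/orP => /andP[/eqP e h].
  by subst u'; rewrite rot_disj.
by subst v'; rewrite fsym (fsym u') rot_disj.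
Qed.

Local Close Scope ring_scope.
Theorem mainTheorem2 (s k : nat) (hs : 2 <= s) (hk : 2 <= k) :
  exists f : KGstab (k * s + 1) k s * KGstab (k * s + 1) k s -> KGstab (k * s + 1) k s,
    is_hom (box_adj (@kg_adj (k * s + 1) k s) (@kg_adj (k * s + 1) k s))
           (@kg_adj (k * s + 1) k s) f.
Proof.
rewrite addn1; apply: gen => //; exact: ltnW.
Qed.
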